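(* Let $a\in[-1,1)$ and $\psi_a=\mathds{1}_{[a,1]}$ on $[-1,1]$. Write $P_{\mathcal{A}_+}(\psi_a)=\sum_{n=0}^\infty c_nt^n$ with $c_n\ge0$, and let $S(a)=\{n\in\mathbb{N}:c_n>0\}$. Then $S(a)=\{0,1\}$ if and only if $-\frac1{\sqrt5}\le a\le0$. Moreover, for every $a\in[-1/\sqrt5,0]$, \[ P_{\mathcal{A}_+}(\psi_a)=\frac12(1-a)+\frac34(1-a^2)t. \]
   Context: $\mathbb{N}=\{0,1,2,\dots\}$. $\psi_a(t)=0$ for $t\in[-1,a)$ and $\psi_a(t)=1$ for $t\in[a,1]$. $\mathcal{A}_+=\{\sum_{n=0}^\infty a_nt^n : a_n\ge0,\ \text{the series converges in }L^2([-1,1])\}$ (real $L^2$ for Lebesgue measure, convergence of partial sums); it is a closed convex cone, $P_{\mathcal{A}_+}$ denotes the metric projection onto it (the unique nearest point), and every element of $\mathcal{A}_+$ has a unique representation $\sum_n c_nt^n$ with $c_n\ge0$. *)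

(* Defs.v *)
From HB Require Import structures.
From mathcomp Require Import all_boot all_order all_algebra.
From mathcomp Require Import all_classical all_reals all_analysis.
Set Implicit Arguments. Unset Strict Implicit. Unset Printing Implicit Defensive.
Import Order.TTheory GRing.Theory Num.Theory.
Import numFieldNormedType.Exports.
Local Open Scope classical_set_scope.
Local Open Scope ring_scope.

Section Defs.
Variable R : realType.

Definition I11 : set R := `[(-1)%R, 1%R].

Definition psi (a : R) (t : R) : R := if a <= t then 1 else 0.

Definition psum (c : nat -> R) (N : nat) (t : R) : R :=
  \sum_(0 <= n < N) c n * t ^+ n.

Definition L2dist2 (f g : R -> R) : \bar R :=
  (\int[@lebesgue_measure R]_(x in I11) ((f x - g x) ^+ 2)%:E)%E.

Definition series_L2_cvg (c : nat -> R) (g : R -> R) : Prop :=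
  measurable_fun I11 g /\
  (fun N : nat => L2dist2 g (psum c N)) @ \oo --> 0%E.

(* c is the coefficient sequence of an element of the cone A_+,
   the element being the L^2-class of g *)
Definition in_Aplus (c : nat -> R) (g : R -> R) : Prop :=
  (forall n, 0 <= c n) /\ series_L2_cvg c g.

Definition is_proj_Aplus (f : R -> R) (c : nat -> R) : Prop :=
  exists g, in_Aplus c g /\
    forall c' g', in_Aplus c' g' -> (L2dist2 f g <= L2dist2 f g')%E.

End Defs.

(* Main.v *)
Require Import Defs.
From HB Require Import structures.
From mathcomp Require Import all_boot all_order all_algebra.
From mathcomp Require Import all_classical all_reals all_analysis.
From mathcomp Require Import ring lra.
From mathcomp Require Import measurable_realfun.
Import Order.TTheory GRing.Theory Num.Theory.
Import numFieldNormedType.Exports.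

Module M_P1.
Set Implicit Arguments. Unset Strict Implicit.
Local Open Scope classical_set_scope.
Local Open Scope ring_scope.


Section L2.
Variable R : realType.
Local Notation mu := (@lebesgue_measure R).
Local Notation D := (@I11 R).

Lemma mD : measurable (D : set (measurableTypeR R)).
Proof. exact: measurable_itv. Qed.

Lemma finD : (mu D < +oo)%E.
Proof. by rewrite /I11 lebesgue_measure_itv /= ifT ?ltry // lte_fin; lra. Qed.

Definition L2 (u : R -> R) := measurable_fun D u /\
  mu.-integrable D (fun x => (u x ^+ 2)%:E).

Definition ip (u v : R -> R) := \int[mu]_(x in D) (u x * v x).

Lemma L2_bdd (u : R -> R) (M : R) : measurable_fun D u -> (forall x, D x -> `|u x| <= M) -> L2 u.
Proof.
move=> mu_ uM; split => //.
apply: (@measurable_bounded_integrable _ _ _ mu (fun x => u x ^+ 2)) => //.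
- exact: mD.
- exact: finD.
- exact: measurable_realfun.measurable_funX.
exists (M ^+ 2); split; first exact: num_real.
move=> r Mr x Dx /=; rewrite normrX; apply/ltW/(le_lt_trans _ Mr).
by rewrite lerXn2r ?nnegrE ?uM ?(le_trans _ (uM x Dx)).
Qed.


Lemma abs_mul_le (x y : R) : `|x * y| <= x ^+ 2 + y ^+ 2.
Proof.
rewrite normrM -[x ^+ 2](real_normK (num_real x)) -[y ^+ 2](real_normK (num_real y)).
have := normr_ge0 x; have := normr_ge0 y; nra.
Qed.

Lemma L2_meas u : L2 u -> measurable_fun D u.
Proof. by case. Qed.

Lemma L2_int_mul u v : L2 u -> L2 v ->
  mu.-integrable D (EFin \o (fun x => u x * v x)).
Proof.
move=> [mu_ iu] [mv iv].
apply: (@le_integrable _ _ _ mu D mD _ (fun x => (u x ^+ 2)%:E + (v x ^+ 2)%:E)%E).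
- by apply/measurable_EFinP; exact: measurable_realfun.measurable_funM.
- move=> x Dx /=; rewrite lee_fin.
  rewrite (ger0_norm (x:=_ + _)); first exact: abs_mul_le.
  by rewrite addr_ge0 // sqr_ge0.
- exact: (integrableD mD iu iv).
Qed.

Lemma L2D u v : L2 u -> L2 v -> L2 (fun x => u x + v x).
Proof.
move=> [mu_ iu] [mv iv]; split.
  exact: measurable_realfun.measurable_funD.
apply: (@le_integrable _ _ _ mu D mD _ (fun x => 2%:E * (u x ^+ 2)%:E + 2%:E * (v x ^+ 2)%:E)%E).
- apply/measurable_EFinP; apply: measurable_realfun.measurable_funX.
  exact: measurable_realfun.measurable_funD.
- move=> x Dx /=; rewrite lee_fin.
  rewrite (ger0_norm (x:=_ + _)); last by rewrite addr_ge0 // mulr_ge0 // sqr_ge0.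
  rewrite ger0_norm ?sqr_ge0 //.
  have := sqr_ge0 (u x - v x); nra.
- exact: (integrableD mD (integrableZl mD 2 iu) (integrableZl mD 2 iv)).
Qed.

Lemma L2Z k u : L2 u -> L2 (fun x => k * u x).
Proof.
move=> [mu_ iu]; split.
  exact: measurable_realfun.measurable_funM.
apply: (@eq_integrable _ _ _ mu D mD (fun x => (k ^+ 2)%:E * (u x ^+ 2)%:E)%E).
  by move=> x _ /=; rewrite -EFinM exprMn.
exact: (integrableZl mD (k ^+ 2) iu).
Qed.

Lemma L2N u : L2 u -> L2 (fun x => - u x).
Proof.
move=> hu; have := L2Z (-1) hu.
by congr L2; apply/funext => x; rewrite mulN1r.
Qed.

Lemma L2B u v : L2 u -> L2 v -> L2 (fun x => u x - v x).
Proof. by move=> hu hv; apply: L2D => //; exact: L2N. Qed.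

Lemma ipC u v : ip u v = ip v u.
Proof. by rewrite /ip; apply: eq_Rintegral => x _; rewrite mulrC. Qed.

Lemma ipDl u v w : L2 u -> L2 v -> L2 w ->
  ip (fun x => u x + v x) w = ip u w + ip v w.
Proof.
move=> hu hv hw; rewrite /ip -RintegralD; last 3 first.
- exact: mD.
- exact: L2_int_mul.
- exact: L2_int_mul.
by apply: eq_Rintegral => x _; rewrite mulrDl.
Qed.

Lemma ipZl k u w : L2 u -> L2 w ->
  ip (fun x => k * u x) w = k * ip u w.
Proof.
move=> hu hw; rewrite /ip -RintegralZl; last 2 first.
- exact: mD.
- exact: L2_int_mul.
by apply: eq_Rintegral => x _; rewrite mulrA.
Qed.

Lemma ip_ge0 u : 0 <= ip u u.
Proof. by apply: Rintegral_ge0 => x _; rewrite -expr2 sqr_ge0. Qed.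

Lemma ip_ext u u' v : (forall x, D x -> u x = u' x) -> ip u v = ip u' v.
Proof. by move=> h; apply: eq_Rintegral => x /set_mem Dx; rewrite h. Qed.


Lemma ip_psi_set (x : R) k : -1 <= x ->
  ip (psi x) (fun t => t ^+ k) =
  \int[mu]_(t in (`[x, 1]%classic : set (measurableTypeR R))) (t ^+ k).
Proof.
move=> x1; rewrite /ip.
rewrite (_ : (`[x, 1]%classic : set (measurableTypeR R)) = D `&` `[x, +oo[%classic); last first.
  apply/seteqP; split => t /=; rewrite /I11 /= !in_itv /= ?andbT.
    by move=> /andP[h1 h2]; split => //; apply/andP; split => //; lra.
  by move=> [/andP[h1 h2] h3]; apply/andP; split.
rewrite Rintegral_mkcondr; apply: eq_Rintegral => t _.
rewrite patchE /psi; case: ifPn => xt.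
  by rewrite mem_set ?mul1r //= in_itv /= xt.
rewrite mul0r ifF //; apply/negbTE; apply: contra xt; rewrite inE /= in_itv /= andbT.
by [].
Qed.

Lemma int_pow (x : R) k : x <= 1 ->
  \int[mu]_(t in (`[x, 1]%classic : set (measurableTypeR R))) (t ^+ k) =
  (1 - x ^+ k.+1) / k.+1%:R.
Proof.
rewrite le_eqVlt => /predU1P[->|x1].
  rewrite set_itv1 Rintegral_set1 expr1n subrr mul0r //.
rewrite /Rintegral.
rewrite (@continuous_FTC2 _ (fun t => t ^+ k) (fun t => t ^+ k.+1 / k.+1%:R)) //=.
- by rewrite expr1n -mulrBl.
- by apply: continuous_subspaceT => t; exact: exprn_continuous.
- split.
  + move=> t _; apply: derivableM; first exact: exprn_derivable.
    exact: derivable_cst.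
  + apply: cvg_at_right_filter; apply: cvgM; last exact: cvg_cst.
    exact: exprn_continuous.
  + apply: cvg_at_left_filter; apply: cvgM; last exact: cvg_cst.
    exact: exprn_continuous.
- move=> t _; rewrite derive1Mr; last exact: exprn_derivable.
  rewrite exp_derive1 /= mulrC /GRing.scale /= mulrA mulVf ?mul1r //.
Qed.

Lemma J (x : R) k : -1 <= x <= 1 ->
  ip (psi x) (fun t => t ^+ k) = (1 - x ^+ k.+1) / k.+1%:R.
Proof. by move=> /andP[h1 h2]; rewrite ip_psi_set // int_pow. Qed.


Definition mon (k : nat) := fun t : R => t ^+ k.

Lemma L2_mon k : L2 (mon k).
Proof.
apply: (@L2_bdd _ 1).
  by apply: measurable_funX; exact: measurable_id.
move=> t; rewrite /I11 /= in_itv /= => /andP[h1 h2].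
by rewrite /mon normrX exprn_ile1 // ler_norml h1 h2.
Qed.

Lemma psi_indic (x : R) : psi x = \1_(`[x, +oo[%classic) .
Proof.
apply/funext => t; rewrite /psi indicE; case: ifPn => xt.
  by rewrite mem_set //= in_itv /= xt.
by rewrite memNset // /= in_itv /= andbT (negbTE xt).
Qed.

Lemma L2_psi x : L2 (psi x).
Proof.
apply: (@L2_bdd _ 1).
  by rewrite psi_indic; apply: measurable_indic; exact: measurable_itv.
by move=> t _; rewrite /psi; case: ifP; rewrite ?normr1 ?normr0.
Qed.

Lemma L2_ext u v : (forall x, u x = v x) -> L2 u -> L2 v.
Proof. by move=> h; have -> : u = v by apply/funext. Qed.

Lemma L2_psum (c : nat -> R) N : L2 (psum c N).
Proof.
elim: N => [|N ih].
  apply: (@L2_bdd _ 0); first by rewrite /psum; under eq_fun do rewrite big_geq //; exact: measurable_cst.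
  by move=> t _; rewrite /psum big_geq // normr0.
apply: (@L2_ext (fun t => psum c N t + c N * mon N t)).
  by move=> t; rewrite /psum big_nat_recr.
by apply: L2D => //; apply: L2Z; exact: L2_mon.
Qed.

Lemma dist_ip u v : L2 u -> L2 v ->
  L2dist2 u v = (ip (fun x => u x - v x) (fun x => u x - v x))%:E.
Proof.
move=> hu hv; have h := L2B hu hv.
rewrite /L2dist2 /ip /Rintegral fineK.
  by apply: eq_integral => x _; rewrite expr2.
apply: integrable_fin_num; first exact: mD.
exact: L2_int_mul.
Qed.

Lemma ipNl u w : L2 u -> L2 w -> ip (fun x => - u x) w = - ip u w.
Proof.
move=> hu hw; rewrite -mulN1r -ipZl //.
by apply: ip_ext => x _; rewrite mulN1r.
Qed.

Lemma ipBl u v w : L2 u -> L2 v -> L2 w ->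
  ip (fun x => u x - v x) w = ip u w - ip v w.
Proof.
move=> hu hv hw; rewrite ipDl //; last exact: L2N.
by rewrite ipNl.
Qed.

Lemma ipDr u v w : L2 u -> L2 v -> L2 w ->
  ip w (fun x => u x + v x) = ip w u + ip w v.
Proof. by move=> hu hv hw; rewrite ipC ipDl // ![ip w _]ipC. Qed.

Lemma ipZr k u w : L2 u -> L2 w -> ip w (fun x => k * u x) = k * ip w u.
Proof. by move=> hu hw; rewrite ipC ipZl // ipC. Qed.

Lemma ipBr u v w : L2 u -> L2 v -> L2 w ->
  ip w (fun x => u x - v x) = ip w u - ip w v.
Proof. by move=> hu hv hw; rewrite ipC ipBl // ![ip _ w]ipC. Qed.

Lemma quad u v k : L2 u -> L2 v ->
  ip (fun x => u x + k * v x) (fun x => u x + k * v x) =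
  ip u u + 2 * k * ip u v + k ^+ 2 * ip v v.
Proof.
move=> hu hv; have hkv := L2Z k hv.
rewrite ipDl //.
rewrite (@ipDr u (fun x => k * v x) u) //.
rewrite (@ipDr u (fun x => k * v x) (fun x => k * v x)) //.
rewrite ipZl // ipZr // ipZr // ipZl //.
rewrite (ipC v u); first lra. exact: L2D.
Qed.

End L2.

Lemma small_le0 (R : realType) (x K d : R) : 0 < d ->
  (forall e, 0 < e -> e <= d -> x <= e * K) -> x <= 0.
Proof.
move=> d0 h; rewrite leNgt; apply/negP => x0.
have K1 : 0 < `|K| + 1 by rewrite ltr_wpDl.
pose e := Num.min d (x / (`|K| + 1)).
have e0 : 0 < e by rewrite lt_min d0 divr_gt0.
have ed : e <= d by rewrite ge_min lexx.
have ex : e * (`|K| + 1) <= x.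
  by rewrite -ler_pdivlMr // ge_min lexx orbT.
have := h e e0 ed; have := ler_norm K; have := normr_ge0 K; nra.
Qed.

End M_P1.
Import M_P1.

Module M_P2.
Set Implicit Arguments. Unset Strict Implicit.
Local Open Scope classical_set_scope.
Local Open Scope ring_scope.


Section W.
Variable R : realType.

Lemma cs_bound (h p : R -> R) (l : R) : L2 h -> L2 p -> 0 < l ->
  l * `|ip h p| <= ip h h + l ^+ 2 * ip p p.
Proof.
move=> hh hp l0.
have q1 := quad l hh hp; have q2 := quad (- l) hh hp.
have g1 := ip_ge0 (fun x => h x + l * p x).
have g2 := ip_ge0 (fun x => h x + - l * p x).
rewrite q1 in g1; rewrite q2 in g2.
have := ip_ge0 p; have := ip_ge0 h.
case: (lerP 0 (ip h p)) => s.
  rewrite ger0_norm //; nra.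
rewrite ltr0_norm //; nra.
Qed.

Lemma weak_lim (g p : R -> R) (s : nat -> R -> R) : L2 g -> L2 p ->
  (forall N, L2 (s N)) ->
  (fun N => L2dist2 g (s N)) @ \oo --> 0%E ->
  (fun N => ip (s N) p) @ \oo --> ip g p.
Proof.
move=> hg hp hs cv.
have hh N : L2 (fun x => g x - s N x) by exact: L2B.
have E N : L2dist2 g (s N) = (ip (fun x => g x - s N x) (fun x => g x - s N x))%:E.
  exact: dist_ip.
have H0 : (fun N => ip (fun x => g x - s N x) (fun x => g x - s N x)) @ \oo --> 0.
  have Ef := funext E; rewrite Ef in cv.
  exact: (fine_cvg cv).
move/cvgr0Pnorm_le : H0 => H0.
apply/cvgrPdist_le => eps eps0.
set K := ip p p.
have K0 : 0 <= K by exact: ip_ge0.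
pose lam := eps / (2 * (K + 1)).
have lam0 : 0 < lam by rewrite /lam; apply: divr_gt0 => //; apply: mulr_gt0 => //; lra.
have lamK : lam * (2 * (K + 1)) = eps.
  by rewrite /lam divfK //; apply/lt0r_neq0; lra.
have le0 : 0 < lam * eps / 2 by apply: divr_gt0 => //; exact: mulr_gt0.
have := H0 (lam * eps / 2) le0.
apply: filterS => N hN.
rewrite -ipBl //.
have hb := cs_bound (hh N) hp lam0.
move: hN hb; set y := ip _ _; set x := ip _ _ => hN hb.
have hy : y <= lam * eps / 2 by exact: le_trans (ler_norm y) hN.
have e1 : lam * K = eps / 2 - lam by rewrite -lamK; field.
have e2 : lam ^+ 2 * K = lam * (eps / 2 - lam) by rewrite -e1 expr2 mulrA.
have : lam * `|x| <= lam * eps.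
  apply: (le_trans hb); rewrite e2.
  have : 0 <= lam * lam by nra.
  lra.
by rewrite ler_pM2l.
Unshelve. all: by end_near.
Qed.

End W.

End M_P2.
Import M_P2.

Module M_P3.
Set Implicit Arguments. Unset Strict Implicit.
Local Open Scope classical_set_scope.
Local Open Scope ring_scope.


Section M.
Variable R : realType.

Lemma ip_ext2 (u u' v v' : R -> R) : (forall x, I11 x -> u x = u' x) ->
  (forall x, I11 x -> v x = v' x) -> ip u v = ip u' v'.
Proof.
move=> h1 h2; rewrite (ip_ext _ h1) ipC (ip_ext _ h2) ipC //.
Qed.

Lemma L2_0 : L2 (fun _ : R => 0).
Proof.
apply: (@L2_bdd _ _ 0); first exact: measurable_cst.
by move=> *; rewrite normr0.
Qed.

Lemma psum0 N (x : R) : psum (fun _ => 0) N x = 0.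
Proof. by rewrite /psum big1 // => i _; rewrite mul0r. Qed.

Lemma psum_pert (c : nat -> R) n eps N (x : R) : (n < N)%N ->
  psum (fun m => c m + (if m == n then eps else 0)) N x = psum c N x + eps * x ^+ n.
Proof.
move=> nN; rewrite /psum.
under eq_bigr do rewrite mulrDl.
rewrite big_split /=; congr (_ + _).
rewrite (bigD1_seq n) /= ?mem_index_iota ?iota_uniq //.
rewrite eqxx big1 ?addr0 // => m /negbTE ->; rewrite mul0r //.
Qed.

Lemma ip_psum (c : nat -> R) N (p : R -> R) : L2 p ->
  ip (psum c N) p = \sum_(0 <= n < N) c n * ip (mon n) p.
Proof.
move=> hp; elim: N => [|N ih].
  rewrite big_geq //.
  have -> : psum c 0 = (fun _ => 0) by apply/funext => x; rewrite /psum big_geq.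
  rewrite /ip; under eq_Rintegral do rewrite mul0r.
  by rewrite Rintegral_cst ?mul0r //; exact: mD.
rewrite big_nat_recr //= -ih.
have -> : psum c N.+1 = (fun t => psum c N t + c N * mon N t).
  by apply/funext => x; rewrite /psum big_nat_recr.
rewrite ipDl //; first by rewrite ipZl //; exact: L2_mon.
  exact: L2_psum.
by apply: L2Z; exact: L2_mon.
Qed.

Lemma Jm i k : ip (@mon R i) (mon k) = (1 - (-1) ^+ (i + k).+1) / (i + k).+1%:R.
Proof.
rewrite -(@J R (-1) (i + k)%N); last by rewrite lexx; apply/andP; split => //; lra.
rewrite /ip; apply: eq_Rintegral => x; rewrite inE /I11 /= in_itv /= => /andP[h1 h2].
by rewrite /psi h1 /mon mul1r exprD.
Qed.

End M.

End M_P3.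
Import M_P3.

Module M_P5.
Set Implicit Arguments. Unset Strict Implicit.
Local Open Scope classical_set_scope.
Local Open Scope ring_scope.


Section Real.
Variable R : realType.

Lemma uv_zero (u v : R) :
  (forall e, 0 < e -> e <= 1 -> 0 <= u * e + v * e ^+ 2 /\
      u * e + v * e ^+ 2 <= e ^+ 3 * (u + v)) -> u = 0 /\ v = 0.
Proof.
move=> h.
have u_ge0 : 0 <= u.
  rewrite -oppr_le0; apply: (@small_le0 _ _ v 1) => // e e0 e1.
  have [h1 _] := h e e0 e1.
  have : e * (- u) <= e * (e * v) by rewrite expr2 in h1; nra.
  by rewrite ler_pM2l.
have u_le0 : u <= 0.
  apply: (@small_le0 _ _ (`|u + v| + `|v|) 1) => // e e0 e1.
  have [_ h2] := h e e0 e1.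
  rewrite !exprS expr0 !mulr1 in h2.
  have h2' : e * u <= e * (e * (e * (u + v)) - e * v) by lra.
  rewrite ler_pM2l // in h2'.
  have ew : e * (u + v) <= `|u + v|.
    case: (lerP 0 (u + v)) => s.
      rewrite ger0_norm //; nra.
    have := normr_ge0 (u + v); nra.
  have ew2 : e * (e * (u + v)) <= e * `|u + v| by rewrite ler_pM2l.
  have ev : - (e * v) <= e * `|v|.
    by rewrite -mulrN ler_pM2l // -normrN ler_norm.
  lra.
have u0 : u = 0 by apply/eqP; rewrite eq_le u_le0 u_ge0.
subst u.
have [h1 _] := h 1 ltr01 (lexx _).
have q0 : 0 < 1/2 :> R by lra.
have q1 : 1/2 <= 1 :> R by lra.
have [_ h2] := h (1/2) q0 q1.
split => //; apply/eqP; rewrite eq_le; apply/andP; split; last by lra.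
move: h2; rewrite !mul0r !add0r; nra.
Qed.


Lemma geom_bound (x : R) m : 0 <= x -> x <= 1/5 ->
  1 - x ^+ m.+1 <= 5/4 * (1 - x).
Proof.
move=> x0 x5; elim: m => [|m ih]; first by rewrite expr1; lra.
have -> : 1 - x ^+ m.+2 = (1 - x) + x * (1 - x ^+ m.+1).
  by rewrite [x ^+ m.+2]exprS; ring.
nra.
Qed.

Lemma odd_ineq (x : R) m : 0 <= x -> x <= 1/5 ->
  (2 * m%:R + 3) * (1 - x ^+ m.+1) <= 3 * (m%:R + 1) * (1 - x).
Proof.
move=> x0 x5; case: m => [|[|m]].
- by rewrite expr1 mulr0 add0r; lra.
- rewrite expr2; have -> : (1%N%:R : R) = 1 by []; nra.
have hg := geom_bound m.+2 x0 x5.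
have hm : 0 <= (m%:R : R) by exact: ler0n.
have -> : (m.+2%:R : R) = m%:R + 2 by rewrite -addn2 natrD.
have hx : 0 <= 1 - x by lra.
have : (2 * (m%:R + 2) + 3) * (1 - x ^+ m.+3) <=
  (2 * (m%:R + 2) + 3) * (5/4 * (1 - x)).
  by rewrite ler_pM2l //; lra.
nra.
Qed.


Definition dval (a : R) n :=
  (1 - a ^+ n.+1) / n.+1%:R -
  ((1 - a) / 2 * ((1 - (-1) ^+ n.+1) / n.+1%:R) +
   3 / 4 * (1 - a ^+ 2) * ((1 - (-1) ^+ n.+2) / n.+2%:R)).

Lemma dval_le0 (a : R) n : -1 <= a <= 0 -> 5 * a ^+ 2 <= 1 -> dval a n <= 0.
Proof.
move=> /andP[a1 a0] a5; rewrite /dval.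
have en := odd_double_half n.
case hn: (odd n) en => /= en; rewrite -en; move: (n./2) => m {en hn}.
  rewrite add1n.
  have e1 : (-1) ^+ (m.*2.+2) = 1 :> R by rewrite -signr_odd /= odd_double.
  have e2 : (-1) ^+ (m.*2.+3) = -1 :> R by rewrite -signr_odd /= odd_double.
  have e3 : a ^+ (m.*2.+2) = (a ^+ 2) ^+ m.+1 by rewrite -exprM mul2n doubleS.
  have e4 : (m.*2.+2)%:R = 2 * (m%:R + 1) :> R.
    by rewrite -addn2 natrD -muln2 natrM; ring.
  have e5 : (m.*2.+3)%:R = 2 * m%:R + 3 :> R.
    by rewrite -addn3 natrD -muln2 natrM; ring.
  rewrite e1 e2 e3 e4 e5.
  have hm : 0 <= (m%:R : R) by exact: ler0n.
  have hx0 : 0 <= a ^+ 2 by exact: sqr_ge0.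
  have hx5 : a ^+ 2 <= 1/5 by lra.
  have oi := odd_ineq m hx0 hx5.
  set Y := (a ^+ 2) ^+ m.+1 in oi *.
  set x := a ^+ 2 in oi hx0 hx5 *.
  have -> : (1 - Y) / (2 * (m%:R + 1)) - ((1 - a) / 2 * ((1 - 1) / (2 * (m%:R + 1))) +
     3 / 4 * (1 - x) * ((1 - -1) / (2 * m%:R + 3))) =
     ((2 * m%:R + 3) * (1 - Y) - 3 * (m%:R + 1) * (1 - x)) /
     (2 * (m%:R + 1) * (2 * m%:R + 3)).
    by field; apply/andP; split; apply/lt0r_neq0; lra.
  apply: mulr_le0_ge0; first lra.
  rewrite invr_ge0; nra.
rewrite add0n.
have e1 : (-1) ^+ (m.*2.+1) = -1 :> R by rewrite -signr_odd /= odd_double.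
have e2 : (-1) ^+ (m.*2.+2) = 1 :> R by rewrite -signr_odd /= odd_double.
have e3 : a ^+ (m.*2.+1) = a * (a ^+ 2) ^+ m by rewrite exprS -exprM mul2n.
have e5 : (m.*2.+1)%:R = 2 * m%:R + 1 :> R.
  by rewrite -addn1 natrD -muln2 natrM; ring.
rewrite e1 e2 e3 e5.
have hm : 0 <= (m%:R : R) by exact: ler0n.
have hY : (a ^+ 2) ^+ m <= 1 by rewrite exprn_ile1 // ?sqr_ge0 //; nra.
set Y := (a ^+ 2) ^+ m in hY *.
have -> : (1 - a * Y) / (2 * m%:R + 1) - ((1 - a) / 2 * ((1 - -1) / (2 * m%:R + 1)) +
   3 / 4 * (1 - a ^+ 2) * ((1 - 1) / (m.*2.+2)%:R)) =
   (a * (1 - Y)) / (2 * m%:R + 1).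
  by field; apply/andP; split; apply/lt0r_neq0; [lra|rewrite -muln2 natrM; nra].
apply: mulr_le0_ge0; first by apply: mulr_le0_ge0 => //; lra.
rewrite invr_ge0; lra.
Qed.


Lemma sqrt5_facts : 0 < Num.sqrt (5 : R) /\ Num.sqrt (5 : R) ^+ 2 = 5.
Proof.
split; first by rewrite sqrtr_gt0; lra.
by rewrite sqr_sqrtr //; lra.
Qed.

Lemma sqrt_part1 (a : R) : a <= 0 -> 5 * a ^+ 2 <= 1 -> - (Num.sqrt 5)^-1 <= a.
Proof.
move=> a0 a5; have [s0 s2] := sqrt5_facts.
set s := Num.sqrt 5 in s0 s2 *.
have ws : s^-1 * s = 1 by rewrite mulVf // gt_eqF.
have w0 : 0 < s^-1 by rewrite invr_gt0.
set w := s^-1 in ws w0 *.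
rewrite expr2 in s2.
have : -1 <= a * s.
  rewrite leNgt; apply/negP => h.
  have : 1 < (a * s) * (a * s) by nra.
  have -> : (a * s) * (a * s) = a ^+ 2 * (s * s) by rewrite expr2; ring.
  rewrite s2; lra.
move=> h; have : - w * s <= a * s by rewrite mulNr ws.
by rewrite ler_pM2r.
Qed.

Lemma sqrt_part2 (a : R) : - (Num.sqrt 5)^-1 <= a <= 0 -> 5 * a ^+ 2 <= 1.
Proof.
move=> /andP[h a0]; have [s0 s2] := sqrt5_facts.
set s := Num.sqrt 5 in s0 s2 h *.
have ws : s^-1 * s = 1 by rewrite mulVf // gt_eqF.
have w0 : 0 < s^-1 by rewrite invr_gt0.
set w := s^-1 in ws w0 h *.
rewrite expr2 in s2.
have h1 : -1 <= a * s.
  have : - w * s <= a * s by rewrite ler_pM2r.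
  by rewrite mulNr ws.
have : (a * s) * (a * s) <= 1 by nra.
have -> : (a * s) * (a * s) = a ^+ 2 * (s * s) by rewrite expr2; ring.
by rewrite s2; lra.
Qed.

End Real.

End M_P5.
Import M_P5.

Module M_P4.
Set Implicit Arguments. Unset Strict Implicit.
Local Open Scope classical_set_scope.
Local Open Scope ring_scope.


Section Main.
Variable R : realType.
Variables (a : R) (c : nat -> R) (g : R -> R).
Hypothesis ha : -1 <= a < 1.
Hypothesis hc0 : forall n, 0 <= c n.
Hypothesis mg : measurable_fun (@I11 R) g.
Hypothesis cv : (fun N => L2dist2 g (psum c N)) @ \oo --> 0%E.
Hypothesis hmin : forall c' g', in_Aplus c' g' ->
  (L2dist2 (psi a) g <= L2dist2 (psi a) g')%E.

Let f := psi a.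
Let r := fun x => f x - g x.

Lemma L2f : L2 f. Proof. exact: L2_psi. Qed.

Lemma L2r : L2 r.
Proof.
have h0 : in_Aplus (fun _ : nat => 0) (fun _ : R => 0).
  split => //; split; first exact: measurable_cst.
  have -> : (fun N => L2dist2 (fun _ : R => 0) (psum (fun _ => 0) N)) = (fun _ => 0%E).
    apply/funext => N; rewrite /L2dist2.
    under eq_integral do rewrite psum0 subrr expr0n /=.
    by rewrite integral0.
  exact: cvg_cst.
have := hmin h0; rewrite (dist_ip L2f (@L2_0 R)) => hle.
split; first by apply: measurable_funB => //; exact: (L2_meas L2f).
apply/integrableP; split.
  apply/measurable_EFinP; apply: measurable_funX.
  by apply: measurable_funB => //; exact: (L2_meas L2f).
under eq_integral do rewrite gee0_abs ?lee_fin ?sqr_ge0 //.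
by apply: le_lt_trans hle _; rewrite ltry.
Qed.

Lemma L2g : L2 g.
Proof.
apply: (@L2_ext R (fun x => f x - r x)); first by move=> x; rewrite /r; lra.
by apply: L2B; [exact: L2f | exact: L2r].
Qed.


Lemma perturb n eps : 0 <= c n + eps ->
  0 <= - (2 * eps * ip r (mon n)) + eps ^+ 2 * ip (mon n) (mon n).
Proof.
move=> h.
pose c' m := c m + (if m == n then eps else 0).
pose g' x := g x + eps * mon n x.
have hg' : L2 g' := L2D L2g (L2Z eps (@L2_mon R n)).
have hA : in_Aplus c' g'.
  split.
    move=> m; rewrite /c'; case: eqP => [->|_] //; rewrite addr0 //.
  split; first exact: (L2_meas hg').
  apply: (cvg_trans _ cv); apply: near_eq_cvg; near=> N.
  have nN : (n < N)%N by near: N; exists n.+1 => // k.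
  rewrite /L2dist2; apply: eq_integral => x _.
  rewrite psum_pert // /g' /mon; congr (_%:E); congr (_ ^+ 2); lra.
have := hmin hA.
rewrite (dist_ip L2f L2g) (dist_ip L2f hg') lee_fin.
have hr' : L2 (fun x => r x + - eps * mon n x) := L2D L2r (L2Z (- eps) (@L2_mon R n)).
rewrite (@ip_ext2 R (fun x => f x - g' x) (fun x => r x + - eps * mon n x) (fun x => f x - g' x) (fun x => r x + - eps * mon n x)); last 2 first.
- by move=> x _; rewrite /r /g' /f; lra.
- by move=> x _; rewrite /r /g' /f; lra.
rewrite quad; last 2 first.
- exact: L2r.
- exact: (@L2_mon R n).
rewrite sqrrN.
set A := ip (fun x => f x - g x) _.
set B := ip r r.
have -> : A = B by [].
lra.
Unshelve. all: by end_near.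
Qed.

Lemma e_le0 n : ip r (mon n) <= 0.
Proof.
apply: (@small_le0 _ _ (ip (mon n) (mon n) / 2) 1) => // e e0 e1.
have := perturb (n := n) (eps := e); rewrite addr_ge0 ?(ltW e0) // => /(_ isT) h.
have : e * (2 * ip r (mon n)) <= e * (e * ip (mon n) (mon n)) by nra.
rewrite ler_pM2l // => h2.
lra.
Qed.

Lemma e_eq0 n : 0 < c n -> ip r (mon n) = 0.
Proof.
move=> cn; apply/eqP; rewrite eq_le e_le0 /=.
rewrite -oppr_le0.
apply: (@small_le0 _ _ (ip (mon n) (mon n) / 2) (c n)) => // e e0 e1.
have := perturb (n := n) (eps := - e); rewrite subr_ge0 e1 => /(_ isT) h.
rewrite sqrrN in h.
have : e * (- (2 * ip r (mon n))) <= e * (e * ip (mon n) (mon n)) by nra.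
rewrite ler_pM2l // => h2.
lra.
Qed.


Lemma ha' : -1 <= a <= 1.
Proof. by move: ha => /andP[h1 h2]; rewrite h1 ltW. Qed.

Lemma ipf n : ip f (mon n) = (1 - a ^+ n.+1) / n.+1%:R.
Proof. exact: (J n ha'). Qed.

Lemma ipg n : ip g (mon n) = (1 - a ^+ n.+1) / n.+1%:R - ip r (mon n).
Proof.
rewrite -ipf -ipBl; [|exact: L2f|exact: L2r|exact: (@L2_mon R n)].
by apply: ip_ext => x _; rewrite /r; lra.
Qed.

Lemma lim_ip p : L2 p -> (fun N => ip (psum c N) p) @ \oo --> ip g p.
Proof.
move=> hp; apply: weak_lim => //; first exact: L2g.
by move=> N; exact: L2_psum.
Qed.

Lemma split2 (F : nat -> R) N : (2 <= N)%N ->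
  \sum_(0 <= n < N) F n = F 0%N + F 1%N + \sum_(2 <= n < N) F n.
Proof. by move=> hN; rewrite big_ltn 1?(leq_trans _ hN) // big_ltn // addrA. Qed.


Lemma forward : (forall n, 0 < c n <-> (n = 0%N \/ n = 1%N)) ->
  - (Num.sqrt 5)^-1 <= a <= 0.
Proof.
move=> S.
have c0 : 0 < c 0%N by apply/S; left.
have c1 : 0 < c 1%N by apply/S; right.
have cn n : (2 <= n)%N -> c n = 0.
  move=> hn; apply/eqP; rewrite eq_le hc0 andbT leNgt; apply/negP => /S [] h; subst n => //.
have ipgk k : ip g (mon k) = c 0%N * ip (mon 0) (mon k) + c 1%N * ip (mon 1) (mon k).
  have hl := lim_ip (@L2_mon R k).
  have hcst : (fun N => ip (psum c N) (mon k)) @ \oo -->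
      (c 0%N * ip (mon 0) (mon k) + c 1%N * ip (mon 1) (mon k)).
    apply: cvg_near_cst; near=> N.
    have hN : (2 <= N)%N by near: N; exists 2%N.
    rewrite ip_psum; last exact: (@L2_mon R k).
    rewrite split2 // big_nat_cond big1 ?addr0 // => n /andP[/andP[h2 _] _].
    by rewrite cn ?mul0r.
  exact: (cvg_unique _ hl hcst).
have e0 := e_eq0 c0; have e1 := e_eq0 c1; have e2 := e_le0 2; have e3 := e_le0 3.
have R0 := ipg 0; rewrite e0 ipgk !Jm in R0.
have R1 := ipg 1; rewrite e1 ipgk !Jm in R1.
have R2 := ipg 2; rewrite ipgk !Jm in R2.
have R3 := ipg 3; rewrite ipgk !Jm in R3.
have p1 : (-1) ^+ 1 = -1 :> R by rewrite expr1.
have p2 : (-1) ^+ 2 = 1 :> R by rewrite sqrrN expr1n.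
have p3 : (-1) ^+ 3 = -1 :> R by rewrite exprS p2 mulr1.
have p4 : (-1) ^+ 4 = 1 :> R by rewrite exprS p3 mulrNN mulr1.
have p5 : (-1) ^+ 5 = -1 :> R by rewrite exprS p4 mulr1.
move: R0 R1 R2 R3; rewrite !add0n !addn0 !add1n p1 p2 p3 p4 p5 expr1.
move: e2 e3; set E2 := ip r (mon 2); set E3 := ip r (mon 3) => e2 e3.
move: c0 c1; set C0 := c 0%N; set C1 := c 1%N.
clear ipgk S cn e0 e1.
move=> c0 c1 R0 R1 R2 R3.
have hc0' : C0 = (1 - a) / 2 by lra.
have hc1' : C1 = 3 / 4 * (1 - a ^+ 2) by lra.
have a2 : 0 < 1 - a ^+ 2 by lra.
have a3 : a - a ^+ 3 <= 0 by lra.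
have a4 : (1 - a ^+ 4) / 4 <= 3 / 10 * (1 - a ^+ 2) by lra.
have a0 : a <= 0.
  rewrite leNgt; apply/negP => ap.
  have : 0 < a * (1 - a ^+ 2) by exact: mulr_gt0.
  have -> : a * (1 - a ^+ 2) = a - a ^+ 3 by rewrite exprS; ring.
  lra.
have a5 : 5 * a ^+ 2 <= 1.
  have e4 : a ^+ 4 = (a ^+ 2) * (a ^+ 2) by rewrite -exprD.
  rewrite e4 in a4.
  set x := a ^+ 2 in a2 a4 *.
  have : (1 - x) * (1 - 5 * x) >= 0 by lra.
  rewrite pmulr_rge0 //; lra.
by rewrite a0 andbT; apply: sqrt_part1.
Unshelve. all: by end_near.
Qed.


Section Part2.
Hypothesis hI : - (Num.sqrt 5)^-1 <= a <= 0.

Let al := (1 - a) / 2.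
Let be := 3 / 4 * (1 - a ^+ 2).
Let p := fun x => al * mon 0 x + be * mon 1 x.
Let q := fun x => f x - p x.
Let h := fun x => g x - p x.

Lemma a5 : 5 * a ^+ 2 <= 1. Proof. exact: sqrt_part2. Qed.
Lemma a0 : a <= 0. Proof. by case/andP: hI. Qed.
Lemma am1 : -1 <= a. Proof. by case/andP: ha. Qed.
Lemma al0 : 0 < al. Proof. have := a0; rewrite /al; lra. Qed.
Lemma be0 : 0 < be. Proof. have := a5; rewrite /be; lra. Qed.

Lemma L2p : L2 p.
Proof. by apply: L2D; apply: L2Z; exact: L2_mon. Qed.
Lemma L2q : L2 q. Proof. exact: (L2B L2f L2p). Qed.
Lemma L2h : L2 h. Proof. exact: (L2B L2g L2p). Qed.

Lemma ipq n : ip q (mon n) = dval a n.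
Proof.
have hm := @L2_mon R.
rewrite /q ipBl; [|exact: L2f|exact: L2p|exact: hm].
rewrite ipf /p ipDl; [|apply: L2Z; exact: hm..|exact: hm].
rewrite ipZl; [|exact: hm|exact: hm].
rewrite ipZl; [|exact: hm|exact: hm].
by rewrite !Jm add0n add1n.
Qed.

Lemma d_le0 n : ip q (mon n) <= 0.
Proof. rewrite ipq; apply: dval_le0 a5; by rewrite am1 a0. Qed.

Lemma ipqp : ip q p = 0.
Proof.
have hm := @L2_mon R.
rewrite /p ipDr; [|apply: L2Z; exact: hm..|exact: L2q].
rewrite ipZr; [|exact: hm|exact: L2q].
rewrite ipZr; [|exact: hm|exact: L2q].
rewrite !ipq /dval /=.
have p2 : (-1) ^+ 2 = 1 :> R by rewrite sqrrN expr1n.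
have p3 : (-1) ^+ 3 = -1 :> R by rewrite exprS p2 mulr1.
rewrite expr1 p2 p3 /al /be.
have e3 : a ^+ 2 = a * a by rewrite expr2.
lra.
Qed.


Lemma ipgq : ip g q <= 0.
Proof.
apply: (cvgr_to_le (lim_ip L2q)); apply: nearW => N.
rewrite ip_psum; last exact: L2q.
apply: sumr_le0 => n _; rewrite ipC; apply: mulr_ge0_le0 => //.
exact: d_le0.
Qed.

Lemma ipgr : ip g r = 0.
Proof.
have hl := lim_ip L2r.
have hz : (fun N => ip (psum c N) r) @ \oo --> (0 : R).
  apply: cvg_near_cst; apply: nearW => N.
  rewrite ip_psum; last exact: L2r.
  rewrite big1 // => n _; rewrite ipC.
  have := hc0 n; rewrite le_eqVlt => /predU1P[<-|cn]; first by rewrite mul0r.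
  by rewrite e_eq0 // mulr0.
exact: (cvg_unique _ hl hz).
Qed.

Lemma iprp : ip r p <= 0.
Proof.
have hm := @L2_mon R.
rewrite /p ipDr; [|apply: L2Z; exact: hm..|exact: L2r].
rewrite ipZr; [|exact: hm|exact: L2r].
rewrite ipZr; [|exact: hm|exact: L2r].
have := e_le0 0; have := e_le0 1; have := al0; have := be0; nra.
Qed.

Lemma iphh : ip h h <= 0.
Proof.
have -> : ip h h = ip (fun x => q x - r x) h.
  by apply: ip_ext => x _; rewrite /h /q /r; lra.
rewrite ipBl; [|exact: L2q|exact: L2r|exact: L2h].
rewrite /h ipBr; [|exact: L2g|exact: L2p|exact: L2q].
rewrite ipBr; [|exact: L2g|exact: L2p|exact: L2r].
rewrite ipqp (ipC q g) (ipC r g) ipgr.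
have := ipgq; have := iprp; lra.
Qed.

Lemma heq phi : L2 phi -> ip g phi = ip p phi.
Proof.
move=> hphi.
have hz : `|ip h phi| <= 0.
  apply: (@small_le0 _ _ (ip phi phi) 1) => // e e0 _.
  have := cs_bound L2h hphi e0; have := iphh => h1 h2.
  have : e * `|ip h phi| <= e * (e * ip phi phi) by rewrite mulrA -expr2; lra.
  by rewrite ler_pM2l.
have : ip h phi = 0 by apply/eqP; rewrite -normr_le0.
rewrite /h ipBl; [|exact: L2g|exact: L2p|exact: hphi].
lra.
Qed.


Let phi (e : R) := fun x => psi 0 x - psi e x.

Lemma L2phi e : L2 (phi e).
Proof. exact: (L2B (L2_psi 0) (L2_psi e)). Qed.

Lemma ip_mon_phi e n : 0 <= e <= 1 -> ip (mon n) (phi e) = e ^+ n.+1 / n.+1%:R.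
Proof.
move=> he.
rewrite /phi ipBr; [|exact: L2_psi|exact: L2_psi|exact: L2_mon].
have h0 : -1 <= (0 : R) <= 1 by apply/andP; split; lra.
have h1 : -1 <= e <= 1 by case/andP: he => he1 he2; apply/andP; split; lra.
rewrite !(ipC (mon n)) (J n h0) (J n h1).
rewrite expr0n /= -mulrBl; congr (_ * _); lra.
Qed.

Lemma ipp_phi e : 0 <= e <= 1 -> ip p (phi e) = al * e + be * (e ^+ 2 / 2).
Proof.
move=> he; have hm := @L2_mon R.
rewrite /p ipDl; [|apply: L2Z; exact: hm..|exact: L2phi].
rewrite ipZl; [|exact: hm|exact: L2phi].
rewrite ipZl; [|exact: hm|exact: L2phi].
by rewrite !ip_mon_phi // expr1 divr1.
Qed.

Definition Tn (e : R) N := \sum_(0 <= n < N) c n * (e ^+ n.+1 / n.+1%:R).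

Lemma limT e : 0 <= e <= 1 -> Tn e N @[N --> \oo] --> al * e + be * (e ^+ 2 / 2).
Proof.
move=> he; rewrite -ipp_phi // -heq; last exact: L2phi.
apply: (cvg_trans _ (lim_ip (L2phi e))); apply: near_eq_cvg; apply: nearW => N.
rewrite ip_psum; last exact: L2phi.
by apply: eq_bigr => n _; rewrite ip_mon_phi.
Qed.


Definition S2 (e : R) N := \sum_(2 <= n < N) c n * (e ^+ n.+1 / n.+1%:R).

Lemma Tn_split e N : (2 <= N)%N ->
  Tn e N = c 0%N * e + c 1%N * (e ^+ 2 / 2) + S2 e N.
Proof. by move=> hN; rewrite /Tn split2 // expr1 divr1. Qed.

Lemma S2_ge0 e N : 0 <= e -> 0 <= S2 e N.
Proof.
move=> e0; apply: sumr_ge0 => n _; apply: mulr_ge0 => //.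
by apply: divr_ge0; [exact: exprn_ge0|exact: ler0n].
Qed.

Lemma S2_le e N : 0 <= e <= 1 -> S2 e N <= e ^+ 3 * S2 1 N.
Proof.
move=> /andP[e0 e1]; rewrite /S2 big_distrr /=; apply: ler_sum_nat => n /andP[h2 _].
rewrite expr1n mulrCA mul1r ler_wpM2r //.
  by apply: divr_ge0; [exact: hc0|exact: ler0n].
by apply: ler_wiXn2l.
Qed.

Lemma c01 : c 0%N = al /\ c 1%N = be.
Proof.
set u := al - c 0%N; set v := (be - c 1%N) / 2.
suff [u0 v0] : u = 0 /\ v = 0 by move: u0 v0; rewrite /u /v => u0 v0; split; lra.
apply: uv_zero => e e0 e1.
have he : 0 <= e <= 1 by rewrite (ltW e0) e1.
have h1 : 0 <= (1 : R) <= 1 by rewrite ler01 lexx.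
have hA : c 0%N * e + c 1%N * (e ^+ 2 / 2) <= al * e + be * (e ^+ 2 / 2).
  apply: (cvgr_to_ge (limT he)); near=> N.
  have hN : (2 <= N)%N by near: N; exists 2%N.
  rewrite Tn_split //; have := S2_ge0 N (ltW e0); lra.
have hB : al * e + be * (e ^+ 2 / 2) - e ^+ 3 * (al * 1 + be * (1 ^+ 2 / 2)) <=
    c 0%N * e + c 1%N * (e ^+ 2 / 2) - e ^+ 3 * (c 0%N * 1 + c 1%N * (1 ^+ 2 / 2)).
  apply: (cvgr_to_le (cvgB (limT he) (cvgM (cvg_cst (e ^+ 3)) (limT h1)))).
  near=> N.
  have hN : (2 <= N)%N by near: N; exists 2%N.
  change (Tn e N - e ^+ 3 * Tn 1 N <= c 0%N * e + c 1%N * (e ^+ 2 / 2) - e ^+ 3 * (c 0%N * 1 + c 1%N * (1 ^+ 2 / 2))).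
  rewrite !Tn_split //; have := S2_le N he; rewrite !expr1n; lra.
rewrite expr1n in hB.
rewrite /u /v; split; lra.
Unshelve. all: by end_near.
Qed.


Lemma cn0 n : (2 <= n)%N -> c n = 0.
Proof.
move=> hn; have [c0e c1e] := c01.
have h1 : 0 <= (1 : R) <= 1 by rewrite ler01 lexx.
have hl := limT h1.
have : c 0%N * 1 + c 1%N * (1 ^+ 2 / 2) + c n * (1 / n.+1%:R) <=
    al * 1 + be * (1 ^+ 2 / 2).
  apply: (cvgr_to_ge hl); near=> N.
  have hN : (n < N)%N by near: N; exists n.+1.
  rewrite Tn_split ?(leq_trans hn (ltnW hN)) //.
  have : c n * (1 / n.+1%:R) <= S2 1 N.
    rewrite /S2 (bigD1_seq n) /= ?mem_index_iota ?hn ?iota_uniq //.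
    rewrite expr1n lerDl; apply: sumr_ge0 => m _; apply: mulr_ge0; first exact: hc0.
    by rewrite expr1n; apply: divr_ge0 => //; exact: ler0n.
  by move=> hs; rewrite lerD2l.
rewrite c0e c1e => hlim.
have hk : 0 < 1 / n.+1%:R :> R by rewrite divr_gt0 // ltr0n.
move: hk hlim; set k := 1 / n.+1%:R; set K := al * 1 + be * (1 ^+ 2 / 2) => hk hlim.
have hh : c n * k <= 0 by lra.
have := hc0 n => hc.
apply/eqP; rewrite eq_le hc andbT; nra.
Unshelve. all: by end_near.
Qed.

Lemma part2 : c 0%N = (1 - a) / 2 /\ c 1%N = 3 / 4 * (1 - a ^+ 2) /\
  forall n : nat, (2 <= n)%N -> c n = 0.
Proof. by have [h1 h2] := c01; split; [|split; [|exact: cn0]]. Qed.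

End Part2.
End Main.

End M_P4.
Import M_P4.

Local Open Scope ring_scope.

Unset Implicit Arguments. Set Strict Implicit.

Theorem proposition1p10 (R : realType) (a : R) (ha : -1 <= a < 1)
  (c : nat -> R) (hc : is_proj_Aplus (psi a) c) :
  ((forall n : nat, 0 < c n <-> (n = 0%N \/ n = 1%N)) <->
     (- (Num.sqrt 5)^-1 <= a <= 0)) /\
  (- (Num.sqrt 5)^-1 <= a <= 0 ->
     c 0%N = (1 - a) / 2 /\ c 1%N = 3 / 4 * (1 - a ^+ 2) /\
     forall n : nat, (2 <= n)%N -> c n = 0).
Proof.
case: hc => g [[hc0 [mg cv]] hmin].
have P2 := part2 ha hc0 mg cv hmin.
split; last exact: P2.
split; first exact: forward ha hc0 mg cv hmin.
move=> hI; have [e0 [e1 en]] := P2 hI.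
have a0 : a <= 0 by case/andP: hI.
have a5 := sqrt_part2 hI.
move=> n; split.
  case: n => [|[|n]]; [by left|by right|].
  by rewrite en // ltxx.
case=> ->.
  by rewrite e0; apply: divr_gt0 => //; rewrite subr_gt0 (le_lt_trans a0).
rewrite e1; apply: mulr_gt0 => //; rewrite subr_gt0.
apply: le_lt_trans (_ : 1 / 5 < 1); last by rewrite ltr_pdivrMr // mul1r ltr1n.
rewrite ler_pdivlMr // mulrC; exact: a5.
Qed.
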